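(* Let $G$ be a second-countable compact group, let $A$ be a finite-dimensional C*-algebra and let $\alpha\colon G\to\mathrm{Aut}(A)$ be a continuous action. If $\alpha_g$ is outer (i.e. not inner) for every $g\in G\setminus\{1\}$, then $G$ is finite. *)

(* Defs.v *)
From HB Require Import structures.
From mathcomp Require Import all_boot all_order all_algebra falgebra.
From mathcomp Require Import complex.
From mathcomp Require Import boolp classical_sets cardinality reals topology.
Import Order.TTheory GRing.Theory Num.Theory.

Set Implicit Arguments.
Unset Strict Implicit.
Unset Printing Implicit Defensive.

Local Open Scope classical_set_scope.
Local Open Scope ring_scope.

Definition is_group (G : Type) (mul : G -> G -> G) (inv : G -> G) (one : G) :=
  [/\ forall x y z, mul x (mul y z) = mul (mul x y) z,
      forall x, mul one x = x,
      forall x, mul x one = x,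
      forall x, mul (inv x) x = one
    & forall x, mul x (inv x) = one].

Definition is_topological_group (G : topologicalType)
    (mul : G -> G -> G) (inv : G -> G) (one : G) :=
  [/\ is_group mul inv one,
      continuous (fun p : G * G => mul p.1 p.2)
    & continuous inv].

Definition is_compact_group (G : topologicalType)
    (mul : G -> G -> G) (inv : G -> G) (one : G) :=
  [/\ is_topological_group mul inv one,
      hausdorff_space G
    & compact [set: G]].

(* Completeness is automatic in finite dimension.                     *)

Definition is_Cstar_algebra (R : realType) (A : falgType R[i])
    (star : A -> A) (nrm : A -> R) :=
  [/\
      [/\ forall a b, star (a + b) = star a + star b,
          forall (c : R[i]) a, star (c *: a) = conjc c *: star a,
          forall a b, star (a * b) = star b * star a
        & forall a, star (star a) = a],
      [/\ forall a, nrm a = 0 -> a = 0,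
          forall a b, nrm (a + b) <= nrm a + nrm b
        & forall (c : R[i]) a, nrm (c *: a) = Normc.normc c * nrm a],
      forall a b, nrm (a * b) <= nrm a * nrm b
    &
      forall a, nrm (star a * a) = nrm a ^+ 2].

Definition is_star_automorphism (R : realType) (A : falgType R[i])
    (star : A -> A) (f : A -> A) :=
  [/\ forall (c : R[i]) a b, f (c *: a + b) = c *: f a + f b,
      forall a b, f (a * b) = f a * f b,
      forall a, f (star a) = star (f a)
    & bijective f].

Definition is_inner (R : realType) (A : falgType R[i])
    (star : A -> A) (f : A -> A) :=
  exists u : A, [/\ star u * u = 1, u * star u = 1
                  & forall a, f a = u * a * star u].

(* A continuous action of the group (G, mul, inv, one) on A by
   *-automorphisms: a group homomorphism g |-> alpha g into Aut(A) which is
   continuous for the point-norm topology. *)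
Definition is_continuous_action (R : realType) (G : topologicalType)
    (mul : G -> G -> G) (one : G) (A : falgType R[i])
    (star : A -> A) (nrm : A -> R) (alpha : G -> A -> A) :=
  [/\ forall g, is_star_automorphism star (alpha g),
      forall a, alpha one a = a,
      forall g h a, alpha (mul g h) a = alpha g (alpha h a)
    & forall (a : A) (g0 : G) (e : R), 0 < e ->
        \forall g \near g0, nrm (alpha g a - alpha g0 a) < e].

(* Main.v *)
Require Import Defs.
From HB Require Import structures.
From mathcomp Require Import all_boot all_order all_algebra falgebra.
From mathcomp Require Import complex.
From mathcomp Require Import boolp classical_sets cardinality reals topology.
From mathcomp Require Import lra.
Import Order.TTheory GRing.Theory Num.Theory.

Set Implicit Arguments.
Unset Strict Implicit.
Unset Printing Implicit Defensive.

Section Helpers.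
Local Open Scope ring_scope.
Local Open Scope complex_scope.

Lemma normcE (R : realType) (x : R[i]) : (Normc.normc x)%:C = `|x|.
Proof. by []. Qed.

Lemma normc_ge0 (R : realType) (x : R[i]) : 0 <= Normc.normc x.
Proof. by rewrite -lecR normcE normr_ge0. Qed.

Lemma normcN1 (R : realType) : Normc.normc (-1 : R[i]) = 1.
Proof. by apply: complexI; rewrite normcE normrN1. Qed.

Lemma tr_idem (F : numFieldType) n (P : 'M[F]_n) : P *m P = P -> P != 0 -> \tr P != 0.
Proof.
move=> PP P0.
set r := \rank P; set L := col_ebase P; set U := row_ebase P.
set D := (pid_mx r : 'M[F]_n).
have eb : L *m D *m U = P by rewrite /L /D /U /r mulmx_ebase.
have Lu : L \in unitmx by apply: col_ebase_unit.
have Uu : U \in unitmx by apply: row_ebase_unit.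
have rn : (r <= n)%N by apply: rank_leq_col.
have DD : D *m D = D by rewrite /D pid_mx_id.
have e : (L *m D *m U) *m (L *m D *m U) = L *m D *m U by rewrite eb.
have e2 : D *m U *m L *m D = D.
  have := congr1 (fun X => invmx L *m X *m invmx U) e; rewrite /= !mulmxA.
  by rewrite mulVmx // mul1mx !mulmxK.
have trD : \tr P = \tr D.
  rewrite -eb -mulmxA mxtrace_mulC -{1}DD -!mulmxA mxtrace_mulC !mulmxA.
  by rewrite e2.
rewrite trD /D /mxtrace.
suff -> : \sum_i (pid_mx r : 'M[F]_n) i i = \sum_(i < n | (i < r)%N) (1 : F).
  by rewrite (big_ord_narrow rn) sumr_const card_ord pnatr_eq0 /r mxrank_eq0.
by rewrite [in RHS]big_mkcond /=; apply: eq_bigr => i _; rewrite mxE eqxx /=; case: (i < r)%N.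
Qed.

Section CS.
Variable R : realType.
Variable A : falgType R[i].
Variables (star : A -> A) (nrm : A -> R).
Hypothesis HC : is_Cstar_algebra star nrm.

Lemma starD a b : star (a + b) = star a + star b.
Proof. by case: HC => [[]]. Qed.
Lemma starZ c a : star (c *: a) = conjc c *: star a.
Proof. by case: HC => [[]]. Qed.
Lemma starM a b : star (a * b) = star b * star a.
Proof. by case: HC => [[]]. Qed.
Lemma starK a : star (star a) = a.
Proof. by case: HC => [[]]. Qed.
Lemma nrm_eq0 a : nrm a = 0 -> a = 0.
Proof. by case: HC => _ [h _ _] _ _; apply: h. Qed.
Lemma nrmD a b : nrm (a + b) <= nrm a + nrm b.
Proof. by case: HC => _ [_ h _] _ _; apply: h. Qed.
Lemma nrmZ c a : nrm (c *: a) = Normc.normc c * nrm a.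
Proof. by case: HC => _ [_ _ h] _ _; apply: h. Qed.
Lemma nrmM a b : nrm (a * b) <= nrm a * nrm b.
Proof. by case: HC => _ _ h _; apply: h. Qed.
Lemma nrmC a : nrm (star a * a) = nrm a ^+ 2.
Proof. by case: HC => _ _ _ h; apply: h. Qed.

Lemma star0 : star 0 = 0.
Proof. by rewrite -(scale0r 0) starZ rmorph0 !scale0r. Qed.
Lemma starN a : star (- a) = - star a.
Proof. by rewrite -scaleN1r starZ rmorphN1 scaleN1r. Qed.
Lemma starB a b : star (a - b) = star a - star b.
Proof. by rewrite starD starN. Qed.
Lemma star1 : star 1 = 1.
Proof.
by rewrite -[star 1]mulr1 -{2}(starK 1) -starM mulr1 starK.
Qed.
Lemma star_alg c : star (c%:A) = (conjc c)%:A.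
Proof. by rewrite starZ star1. Qed.
Lemma star_sum n (F : 'I_n -> A) : star (\sum_i F i) = \sum_i star (F i).
Proof.
elim: n F => [|n IH] F; first by rewrite !big_ord0 star0.
by rewrite !big_ord_recr /= starD IH.
Qed.

Lemma nrm0 : nrm 0 = 0.
Proof. by rewrite -(scale0r 0) nrmZ (_ : Normc.normc 0 = 0) ?mul0r //; apply: complexI; rewrite normcE normr0. Qed.
Lemma nrmN a : nrm (- a) = nrm a.
Proof. by rewrite -scaleN1r nrmZ normcN1 mul1r. Qed.
Lemma nrm_ge0 a : 0 <= nrm a.
Proof.
have := nrmD a (- a); rewrite subrr nrm0 nrmN.
lra.
Qed.
Lemma nrmB a b : nrm (a - b) = nrm (b - a).
Proof. by rewrite -nrmN opprB. Qed.

Lemma nrm_star_le a : nrm a <= nrm (star a).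
Proof.
have [->|] := eqVneq (nrm a) 0; first exact: nrm_ge0.
move=> na0; have na : 0 < nrm a by rewrite lt_def na0 nrm_ge0.
have := nrmM (star a) a; rewrite nrmC expr2.
by rewrite ler_pM2r.
Qed.
Lemma nrm_star a : nrm (star a) = nrm a.
Proof.
by apply/eqP; rewrite eq_le -{2}(starK a) !nrm_star_le.
Qed.

Lemma CT0 x : star x * x = 0 -> x = 0.
Proof.
move=> h; apply: nrm_eq0; have := nrmC x; rewrite h nrm0 => /esym/eqP.
by rewrite expf_eq0 /= => /eqP.
Qed.


Lemma uniq_from_rem (T : eqType) (s : seq T) :
  (forall x, x \in s -> x \notin rem x s) -> uniq s.
Proof.
elim: s => [//|a t IH] H /=.
have at' : a \notin t by have := H a; rewrite mem_head /= eqxx; apply.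
rewrite at' /=; apply: IH => x xt.
have xa : x != a by apply: contraNneq at' => <-.
have ax : (a == x) = false by rewrite eq_sym (negbTE xa).
by have := H x; rewrite inE xt orbT /= ax inE negb_or => /(_ isT) /andP[].
Qed.

Definition pl (s : seq R[i]) : {poly R[i]} := \prod_(z <- s) ('X - z%:P).

Notation ev h := (horner_alg (h : A)).

Lemma ev_comm h p q : ev h p * ev h q = ev h q * ev h p.
Proof. by rewrite -!rmorphM mulrC. Qed.

Lemma ev_commX h p : h * ev h p = ev h p * h.
Proof. by have := ev_comm h 'X p; rewrite horner_algX. Qed.

Lemma evXC h c : ev h ('X - c%:P) = h - c%:A.
Proof. by rewrite rmorphB /= horner_algX horner_algC. Qed.

Lemma ev_star h : star h = h -> forall p, star (ev h p) = ev h (map_poly conjc p).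
Proof.
move=> hs; elim/poly_ind => [|p c IH].
  by rewrite rmorph0 star0 map_poly0 rmorph0.
rewrite !rmorphD !rmorphM /= map_polyX map_polyC /= !horner_algX !horner_algC.
rewrite starD starM hs IH.
by rewrite star_alg ev_commX.
Qed.

Lemma ev_eig h x mu : h * x = mu *: x -> forall p, ev h p * x = p.[mu] *: x.
Proof.
move=> hx; elim/poly_ind => [|p c IH].
  by rewrite rmorph0 mul0r horner0 scale0r.
rewrite rmorphD rmorphM /= horner_algX horner_algC mulrDl -mulrA hx.
by rewrite -scalerAr IH mulr_algl hornerMXaddC scalerDl scalerA mulrC.
Qed.

Lemma starx0 x : x != 0 -> star x * x != 0.
Proof. by apply: contra => /eqP /CT0 ->. Qed.

Lemma eig_real h x mu : star h = h -> x != 0 -> h * x = mu *: x -> conjc mu = mu.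
Proof.
move=> hs x0 hx.
have e1 : star x * h * x = mu *: (star x * x) by rewrite -mulrA hx scalerAr.
have e2 : star x * h = conjc mu *: star x by rewrite -hs -starM hx starZ.
move: e1; rewrite e2 -scalerAl => /eqP; rewrite -subr_eq0 -scalerBl scaler_eq0.
rewrite (negbTE (starx0 x0)) orbF subr_eq0 => /eqP //.
Qed.

Lemma min_annih h s : ev h (pl s) = 0 ->
  exists s', ev h (pl s') = 0 /\ forall mu, mu \in s' -> ev h (pl (rem mu s')) != 0.
Proof.
move: {2}(size s) (leqnn (size s)) => n; elim: n s => [|n IH] s.
  by rewrite leqn0 size_eq0 => /eqP -> H; exists [::]; split.
move=> sz H; case: (boolP (has (fun mu => ev h (pl (rem mu s)) == 0) s)).
  case/hasP => mu mus /eqP e; apply: (IH (rem mu s)) => //.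
  have sp : (0 < size s)%N by case: (s) mus.
  by rewrite size_rem // -ltnS prednK.
by move/hasPn => Hn; exists s; split.
Qed.


Lemma pl_rem mu s : mu \in s -> pl s = ('X - mu%:P) * pl (rem mu s).
Proof. by move=> mus; rewrite /pl (big_rem mu). Qed.

Lemma min_eig h s : ev h (pl s) = 0 -> forall mu, mu \in s ->
  h * ev h (pl (rem mu s)) = mu *: ev h (pl (rem mu s)).
Proof.
move=> e0 mu mus; move: e0; rewrite (pl_rem mus) rmorphM /= evXC mulrBl mulr_algl.
by move/eqP; rewrite subr_eq0 => /eqP.
Qed.

Section Minimal.
Variables (h : A) (s : seq R[i]).
Hypothesis hs : star h = h.
Hypothesis e0 : ev h (pl s) = 0.
Hypothesis smin : forall mu, mu \in s -> ev h (pl (rem mu s)) != 0.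

Lemma spec_real mu : mu \in s -> conjc mu = mu.
Proof. by move=> mus; apply: (eig_real hs (smin mus) (min_eig e0 mus)). Qed.

Lemma min_uniq : uniq s.
Proof.
apply: uniq_from_rem => mu mus; apply/negP => mur.
have hx := min_eig e0 mus.
have xw : ev h (pl (rem mu s)) = (h - mu%:A) * ev h (pl (rem mu (rem mu s))).
  by rewrite (pl_rem mur) rmorphM /= evXC.
have : star (ev h (pl (rem mu s))) * ev h (pl (rem mu s)) = 0.
  rewrite {1}xw starM starB star_alg (spec_real mus) hs -mulrA mulrBl mulr_algl hx.
  by rewrite subrr mulr0.
by move/CT0/eqP; apply/negP; apply: smin.
Qed.

End Minimal.

Lemma annih h : exists s, ev h (pl s) = 0.
Proof.
set n := \dim (fullv : {vspace A}).
pose T := [tuple h ^+ i | i < n.+1].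
have nf : ~~ free T.
  apply/negP => fT; have := dimvS (subvf <<T>>%VS); rewrite (eqnP fT) size_tuple.
  by rewrite -/n ltnn.
have [k [Hk [i ki]]] : exists k : 'I_n.+1 -> R[i],
    \sum_(i < n.+1) k i *: T`_i = 0 /\ exists i, k i != 0.
  case: (pselect (exists k : 'I_n.+1 -> R[i],
    \sum_(i < n.+1) k i *: T`_i = 0 /\ exists i, k i != 0)) => // H.
  exfalso; apply: (negP nf); apply/freeP => k Hk i; apply/eqP; apply: contraT => ki.
  by exfalso; apply: H; exists k; split => //; exists i.
pose p := \poly_(j < n.+1) k (inord j).
have p0 : p != 0.
  apply: contraNneq ki => p0; have := coef_poly n.+1 (fun j => k (inord j)) i.
  by rewrite ltn_ord inord_val -/p p0 coef0 => <-.
have ep : ev h p = 0.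
  rewrite /p poly_def rmorph_sum /= -[X in _ = X]Hk; apply: eq_bigr => j _.
  by rewrite inord_val linearZ /= rmorphXn /= horner_algX /T nth_mktuple ?mulr_algl.
have [r hr] := closed_field_poly_normal p.
exists r; move: ep; rewrite hr linearZ /= mulr_algl => /eqP; rewrite scaler_eq0 lead_coef_eq0.
by rewrite (negbTE p0) /= => /eqP.
Qed.

End CS.

Section Tr.
Variable R : realType.
Variable A : falgType R[i].
Variables (star : A -> A) (nrm : A -> R).
Hypothesis HC : is_Cstar_algebra star nrm.

Local Notation ev h := (horner_alg (h : A)).
Local Notation nA := (\dim (fullv : {vspace A})).
Local Notation bb i := ((vbasis (fullv : {vspace A}))`_i).
Local Notation crd i x := (coord (vbasis (fullv : {vspace A})) i x).

Lemma expand (x : A) : x = \sum_(i < nA) crd i x *: bb i.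
Proof. exact: coord_vbasis (memvf x). Qed.

Lemma crd_sum (k : 'I_nA -> R[i]) j : crd j (\sum_(i < nA) k i *: bb i) = k j.
Proof. exact: coord_sum_free (basis_free (vbasisP _)). Qed.

Definition Mx (x : A) : 'M[R[i]]_nA := \matrix_(i, j) crd j (x * bb i).

Lemma MxM x y : Mx (x * y) = Mx y *m Mx x.
Proof.
apply/matrixP => i j; rewrite !mxE -mulrA {1}(expand (y * bb i)) mulr_sumr linear_sum.
by apply: eq_bigr => l _; rewrite !mxE -scalerAr linearZ.
Qed.

Lemma Mx_lin c x y : Mx (c *: x + y) = c *: Mx x + Mx y.
Proof. by apply/matrixP => i j; rewrite !mxE mulrDl -scalerAl linearP. Qed.

Fact trL_key : unit. Proof. by []. Qed.
Definition trL := locked_with trL_key (fun x : A => \tr (Mx x)).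
Lemma trLE x : trL x = \tr (Mx x).
Proof. by rewrite /trL unlock. Qed.

Lemma trL_lin c x y : trL (c *: x + y) = c * trL x + trL y.
Proof. by rewrite !trLE Mx_lin mxtraceD mxtraceZ. Qed.

Lemma trL0 : trL 0 = 0.
Proof.
rewrite trLE (_ : Mx 0 = 0) ?mxtrace0 //.
by apply/matrixP => i j; rewrite !mxE mul0r linear0.
Qed.
Lemma trLD x y : trL (x + y) = trL x + trL y.
Proof. by rewrite -[x]scale1r trL_lin mul1r scale1r. Qed.
Lemma trLZ c x : trL (c *: x) = c * trL x.
Proof. by rewrite -[c *: x]addr0 trL_lin trL0 addr0. Qed.
Lemma trLN x : trL (- x) = - trL x.
Proof. by rewrite -scaleN1r trLZ mulN1r. Qed.
Lemma trL_sum n (F : 'I_n -> A) : trL (\sum_i F i) = \sum_i trL (F i).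
Proof.
elim: n F => [|n IH] F; first by rewrite !big_ord0 trL0.
by rewrite !big_ord_recr /= trLD IH.
Qed.

Lemma trLC x y : trL (x * y) = trL (y * x).
Proof. by rewrite !trLE !MxM mxtrace_mulC. Qed.

Lemma trL_crd x : trL x = \sum_(k < nA) crd k (x * bb k).
Proof. by rewrite trLE /mxtrace; apply: eq_bigr => k _; rewrite mxE. Qed.

Lemma Mx0 x : Mx x = 0 -> x = 0.
Proof.
move=> H.
have hb : forall i : 'I_nA, x * bb i = 0.
  move=> i; rewrite (expand (x * bb i)) big1 // => j _.
  by have := congr1 (fun M : 'M[R[i]]_nA => M i j) H; rewrite !mxE => ->; rewrite scale0r.
by rewrite -(mulr1 x) (expand 1) mulr_sumr big1 // => i _; rewrite -scalerAr hb scaler0.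
Qed.

Lemma trL_idem e : e * e = e -> e != 0 -> trL e != 0.
Proof.
move=> ee e0; rewrite trLE; apply: tr_idem; first by rewrite -MxM ee.
by apply: contra e0 => /eqP /Mx0 ->.
Qed.


Lemma pl_neq0_at (s : seq R[i]) mu : uniq s -> mu \in s -> (pl (rem mu s)).[mu] != 0.
Proof.
move=> us mus; rewrite /pl horner_prod prodf_seq_neq0; apply/allP => z zr /=.
rewrite hornerXsubC subr_eq0; apply: contraTneq zr => ->.
by rewrite mem_rem_uniqF.
Qed.

Lemma nondeg a : a != 0 -> exists c, trL (a * c) != 0.
Proof.
move=> a0; set h := a * star a.
have hs : star h = h by rewrite /h (starM HC) (starK HC).
have h0 : h != 0.
  apply: contra a0 => /eqP h0; have : star (star a) * star a = 0 by rewrite (starK HC).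
  by move/(CT0 HC) => sa0; rewrite -(starK HC a) sa0 (star0 HC).
have [s0 e0] := annih h.
have [s [e1 smin]] := min_annih e0.
have us := min_uniq HC hs e1 smin.
have [mu [mus mu0]] : exists mu, mu \in s /\ mu != 0.
  case: s e1 smin us => [|m s'] e1 _ us.
    by move: e1; rewrite /pl big_nil rmorph1 => /eqP; rewrite oner_eq0.
  case: (eqVneq m 0) => [m0|mn0]; last by exists m; rewrite mem_head.
  case: s' e1 us => [|m' s''] e1 us.
    move: e1; rewrite /pl big_cons big_nil mulr1 evXC m0 scale0r subr0 => h00.
    by move: h0; rewrite h00 eqxx.
  exists m'; rewrite !inE eqxx orbT; split => //.
  by move: us; rewrite /= inE m0 eq_sym => /andP [/norP []].
set x := ev h (pl (rem mu s)).
have hx : h * x = mu *: x := min_eig e1 mus.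
have x0 : x != 0 := smin mu mus.
set d := (pl (rem mu s)).[mu].
have d0 : d != 0 := pl_neq0_at us mus.
set e := d^-1 *: x.
have he : h * e = mu *: e by rewrite /e -scalerAr hx !scalerA mulrC.
have ee : e * e = e.
  rewrite {1}/e -scalerAl /x (ev_eig he) -/d scalerA mulVf //.
  by rewrite scale1r.
have e0' : e != 0 by rewrite /e scaler_eq0 invr_eq0 negb_or d0.
exists (star a * e); rewrite mulrA -/h he trLZ mulf_neq0 //.
exact: trL_idem.
Qed.


Lemma nondeg0 a : (forall c, trL (a * c) = 0) -> a = 0.
Proof.
move=> H; apply/eqP; apply: contraT => a0.
by have [c] := nondeg a0; rewrite H eqxx.
Qed.

Lemma nondeg0r a : (forall c, trL (c * a) = 0) -> a = 0.
Proof. by move=> H; apply: nondeg0 => c; rewrite trLC. Qed.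

Lemma trL_bb a : (forall j : 'I_nA, trL (a * bb j) = 0) -> a = 0.
Proof.
move=> H; apply: nondeg0 => c; rewrite (expand c) mulr_sumr trL_sum big1 // => j _.
by rewrite -scalerAr trLZ H mulr0.
Qed.

Definition Gram : 'M[R[i]]_nA := \matrix_(i, j) trL (bb i * bb j).

Lemma Gram_unit : Gram \in unitmx.
Proof.
rewrite -row_free_unit -kermx_eq0; apply/rowV0P => v /sub_kermxP vG.
set a := \sum_(i < nA) v 0 i *: bb i.
have a0 : a = 0.
  apply: trL_bb => j; have := congr1 (fun M : 'rV[R[i]]_nA => M 0 j) vG.
  rewrite !mxE => <-; rewrite /a mulr_suml trL_sum; apply: eq_bigr => i _.
  by rewrite -scalerAl trLZ mxE.
apply/rowP => i; rewrite mxE.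
by have := crd_sum (fun i => v 0 i) i; rewrite -/a a0 linear0 => <-.
Qed.

Definition yb (j : 'I_nA) : A := \sum_(l < nA) invmx Gram l j *: bb l.

Lemma Tdual (i j : 'I_nA) : trL (bb i * yb j) = (i == j)%:R.
Proof.
have := congr1 (fun M : 'M[R[i]]_nA => M i j) (mulmxV Gram_unit).
rewrite /= !mxE => <-; rewrite /yb mulr_sumr trL_sum; apply: eq_bigr => l _.
by rewrite -scalerAr trLZ mxE mulrC.
Qed.

Lemma crd_T x (j : 'I_nA) : crd j x = trL (x * yb j).
Proof.
rewrite {2}(expand x) mulr_suml trL_sum (bigD1 j) //= -scalerAl trLZ Tdual eqxx mulr1.
rewrite big1 ?addr0 // => i /negPf ij.
by rewrite -scalerAl trLZ Tdual ij mulr0.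
Qed.

Lemma expand_r x : x = \sum_(j < nA) trL (bb j * x) *: yb j.
Proof.
apply/eqP; rewrite -subr_eq0; apply/eqP; apply: nondeg0r => c.
rewrite (expand c) mulr_suml trL_sum big1 // => i _.
rewrite -scalerAl trLZ mulrBr mulr_sumr trLD trLN.
rewrite trL_sum (bigD1 i) //= -scalerAr trLZ Tdual eqxx mulr1.
rewrite big1 ?addr0 ?subrr ?mulr0 // => k /negPf ki.
by rewrite -scalerAr trLZ Tdual eq_sym ki mulr0.
Qed.

Lemma casimir1 : \sum_(k < nA) bb k * yb k = 1.
Proof.
apply/eqP; rewrite -subr_eq0; apply/eqP; apply: nondeg0r => x.
rewrite mulrBr mulr1 trLD trLN; apply/eqP; rewrite subr_eq0; apply/eqP.
rewrite [RHS]trL_crd mulr_sumr trL_sum; apply: eq_bigr => k _.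
by rewrite crd_T mulrA.
Qed.

Lemma lin_props (f : A -> A) : (forall c a b, f (c *: a + b) = c *: f a + f b) ->
  [/\ f 0 = 0, forall a b, f (a + b) = f a + f b & forall c a, f (c *: a) = c *: f a].
Proof.
move=> Hf.
have f0 : f 0 = 0.
  have := Hf 1 0 0; rewrite !scale1r addr0 => e.
  by apply: (@addrI _ (f 0)); rewrite addr0 -e.
split => //; first by move=> a b; rewrite -[a]scale1r Hf !scale1r.
by move=> c a; rewrite -[c *: a]addr0 Hf f0 addr0.
Qed.

Lemma lin_sum (f : A -> A) : (forall c a b, f (c *: a + b) = c *: f a + f b) ->
  forall n (F : 'I_n -> R[i]) (G : 'I_n -> A), f (\sum_i F i *: G i) = \sum_i F i *: f (G i).
Proof.
move=> Hf; have [f0 fD fZ] := lin_props Hf.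
elim => [|n IH] F G; first by rewrite !big_ord0.
by rewrite !big_ord_recr /= fD fZ IH.
Qed.

Lemma casimir2 (f : A -> A) : (forall c a b, f (c *: a + b) = c *: f a + f b) ->
  forall a, \sum_(k < nA) f (a * bb k) * yb k = \sum_(k < nA) f (bb k) * yb k * a.
Proof.
move=> Hf a.
transitivity (\sum_(k < nA) \sum_(j < nA) trL (a * bb k * yb j) *: (f (bb j) * yb k)).
  apply: eq_bigr => k _; rewrite {1}(expand (a * bb k)) (lin_sum Hf) mulr_suml.
  by apply: eq_bigr => j _; rewrite crd_T scalerAl.
transitivity (\sum_(j < nA) \sum_(k < nA) trL (bb k * (yb j * a)) *: (f (bb j) * yb k)).
  rewrite exchange_big /=; apply: eq_bigr => j _; apply: eq_bigr => k _.
  by rewrite [in trL (bb k * _)]mulrA [trL (_ * a)]trLC mulrA.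
apply: eq_bigr => j _; rewrite -mulrA [in RHS](expand_r (yb j * a)) mulr_sumr.
by apply: eq_bigr => k _; rewrite scalerAr.
Qed.

End Tr.

Section Sq.
Variable R : realType.
Variable A : falgType R[i].
Variables (star : A -> A) (nrm : A -> R).
Hypothesis HC : is_Cstar_algebra star nrm.

Local Notation ev h := (horner_alg (h : A)).

Lemma left_right (x y : A) : y * x = 1 -> x * y = 1.
Proof.
move=> yx.
have k0 : lker (amull x) == 0%VS.
  apply/lker0P => u v; rewrite !lfunE /= => e.
  by rewrite -[u]mul1r -[v]mul1r -yx -!mulrA e.
have := lker0_lfunVK k0 1; rewrite lfunE /=; set w := ((amull x)^-1)%VF 1 => e.
have yw : y = w by rewrite -[y]mulr1 -e mulrA yx mul1r.
by rewrite yw.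
Qed.

Lemma ev_central z : (forall a, z * a = a * z) -> forall p a, ev z p * a = a * ev z p.
Proof.
move=> zc; elim/poly_ind => [|p c IH] a.
  by rewrite rmorph0 mul0r mulr0.
rewrite rmorphD rmorphM /= horner_algX horner_algC mulrDl mulrDr -mulrA zc.
by rewrite mulrA IH -mulrA mulr_algl mulr_algr -[a * z * _]mulrA ev_commX.
Qed.

Lemma map_pl_real (r : seq R[i]) : (forall x, x \in r -> conjc x = x) ->
  map_poly conjc (pl r) = pl r.
Proof.
move=> H; rewrite /pl rmorph_prod /=; apply: eq_big_seq => x xr.
by rewrite map_polyXsubC; congr ('X - _%:P); apply: H.
Qed.

Lemma real_Re (mu : R[i]) : conjc mu = mu -> mu = (complex.Re mu)%:C.
Proof.
case: mu => a b /= [] e; rewrite /=; congr (_ +i* _); lra.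
Qed.


Lemma sqrt_central z : star z = z -> (forall a, z * a = a * z) -> nrm (z - 1) < 1 ->
  exists s, [/\ star s = s, forall a, s * a = a * s & s * s * z = 1].
Proof.
move=> hs zc zn.
have [s0 e0] := annih z.
have [t [e1 tmin]] := min_annih e0.
have ut := min_uniq HC hs e1 tmin.
have rt := spec_real HC hs e1 tmin.
have pos : forall mu, mu \in t -> 0 < complex.Re mu.
  move=> mu mut.
  set x := ev z (pl (rem mu t)).
  have zx : z * x = mu *: x := min_eig e1 mut.
  have x0 : x != 0 := tmin mu mut.
  have nx : 0 < nrm x.
    by rewrite lt_def (nrm_ge0 HC) andbT; apply: contra x0 => /eqP /(nrm_eq0 HC) ->.
  have e : (z - 1) * x = (mu - 1) *: x by rewrite mulrBl zx mul1r scalerBl scale1r.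
  have := nrmM HC (z - 1) x; rewrite e (nrmZ HC) => hle.
  have hn : Normc.normc (mu - 1) < 1.
    have : Normc.normc (mu - 1) * nrm x < 1 * nrm x.
      by apply: (le_lt_trans hle); rewrite ltr_pM2r.
    by rewrite ltr_pM2r.
  move: hn; rewrite {1}(real_Re (rt mu mut)).
  have -> : (complex.Re mu)%:C - 1 = (complex.Re mu - 1)%:C by rewrite rmorphB rmorph1.
  rewrite /Normc.normc /= expr0n addr0 sqrtr_sqr ltr_norml => /andP [h1 _].
  lra.
pose c (mu : R[i]) := ((Num.sqrt (complex.Re mu))^-1)%:C.
pose P := \sum_(mu <- t) (c mu / (pl (rem mu t)).[mu]) *: pl (rem mu t).
have Pval : forall nu, nu \in t -> P.[nu] = c nu.
  move=> nu nut; rewrite /P horner_sum (bigD1_seq nu) //= hornerZ divfK ?pl_neq0_at //.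
  rewrite big1_seq ?addr0 // => mu /andP [mn mut].
  have nur : nu \in rem mu t by rewrite (mem_rem_uniq _ ut) inE eq_sym mn nut.
  rewrite hornerZ; apply/eqP; rewrite mulf_eq0; apply/orP; right.
  by rewrite (pl_rem nur) hornerM hornerXsubC subrr mul0r.
pose Q := P * P * 'X - 1.
have Qroots : all (root Q) t.
  apply/allP => nu nut; rewrite /root /Q !hornerE Pval //.
  rewrite {3}(real_Re (rt nu nut)) /c -!rmorphM /= subr_eq0.
  have r0 := pos nu nut.
  have -> : (Num.sqrt (complex.Re nu))^-1 * (Num.sqrt (complex.Re nu))^-1 * complex.Re nu = 1.
    by rewrite -invfM -expr2 sqr_sqrtr ?ltW // mulVf // gt_eqF.
  by rewrite rmorph1.
have [q hq] : exists q, Q = q * pl t.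
  by apply: (uniq_roots_prod_XsubC Qroots); rewrite uniq_rootsE.
exists (ev z P); split.
- rewrite (ev_star HC hs); congr (horner_alg _ _).
  rewrite /P rmorph_sum /=; apply: eq_big_seq => mu mut.
  have rr : forall x, x \in rem mu t -> conjc x = x.
    by move=> x xr; apply: rt; apply: (mem_rem xr).
  rewrite map_polyZ map_pl_real //; congr (_ *: _).
  rewrite rmorphM fmorphV /=; congr (_ / _); first by rewrite /c oppr0.
  by have := horner_map conjc (pl (rem mu t)) mu; rewrite /= map_pl_real // (rt mu mut) => <-.
- by move=> a; apply: ev_central.
- have : ev z Q = 0 by rewrite hq rmorphM /= e1 mulr0.
  rewrite /Q rmorphB rmorphM rmorphM /= horner_algX rmorph1 => /eqP.
  by rewrite subr_eq0 => /eqP.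
Qed.

End Sq.

Section Key.
Variable R : realType.
Variable A : falgType R[i].
Variables (star : A -> A) (nrm : A -> R).
Hypothesis HC : is_Cstar_algebra star nrm.

Local Notation nA := (\dim (fullv : {vspace A})).
Local Notation bb i := ((vbasis (fullv : {vspace A}))`_i).

Lemma nrm_sum n (F : 'I_n -> A) : nrm (\sum_i F i) <= \sum_i nrm (F i).
Proof.
elim: n F => [|n IH] F; first by rewrite !big_ord0 (nrm0 HC).
rewrite !big_ord_recr /=; apply: (le_trans (nrmD HC _ _)).
by rewrite lerD2r IH.
Qed.

Lemma inner_intertwine f v : is_star_automorphism star f ->
  (forall a, f a * v = v * a) -> nrm (v - 1) <= 4^-1 -> is_inner star f.
Proof.
case=> Hlin Hmul Hstar _ Hv vn.
set z := star v * v.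
have hs : star z = z by rewrite /z (starM HC) (starK HC).
have sv : forall a, star v * f a = a * star v.
  by move=> a; have := congr1 star (Hv (star a)); rewrite !(starM HC) Hstar !(starK HC).
have zc : forall a, z * a = a * z.
  by move=> a; rewrite /z -mulrA -Hv !mulrA sv.
have zn : nrm (z - 1) < 1.
  have [w vw] : exists w, v = 1 + w by exists (v - 1); rewrite addrC subrK.
  have wn : nrm w <= 4^-1 by move: vn; rewrite vw addrC addKr.
  have ez : z - 1 = star w + w + star w * w.
    rewrite /z vw (starD HC) (star1 HC) mulrDl !mul1r mulrDr mulr1.
    by rewrite [LHS]addrC !addrA addNr add0r [w + _]addrC.
  have e0 := nrm_ge0 HC w.
  rewrite ez; apply: (le_lt_trans (nrmD HC _ _)).
  apply: (le_lt_trans (lerD (nrmD HC _ _) (nrmM HC _ _))).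
  rewrite (nrm_star HC); nra.
have [s [ss sc ssz]] := sqrt_central HC hs zc zn.
set u := v * s.
have uu : star u * u = 1.
  rewrite /u (starM HC) ss !mulrA -[s * star v * v]mulrA -/z -mulrA -sc mulrA.
  exact: ssz.
have uu' : u * star u = 1 := left_right uu.
exists u; split => // a.
have fu : f a * u = u * a by rewrite /u mulrA Hv -mulrA -sc mulrA.
by rewrite -[f a]mulr1 -uu' mulrA fu.
Qed.


Lemma key_lemma : exists n (b : 'I_n -> A) (d : R), 0 < d /\
  forall f, is_star_automorphism star f ->
    (forall k, nrm (f (b k) - b k) < d) -> is_inner star f.
Proof.
set S := \sum_(k < nA) nrm (yb k).
have S0 : 0 <= S by apply: sumr_ge0 => k _; exact: (nrm_ge0 HC).
set d := (4 * (1 + S))^-1.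
have d0 : 0 < d by rewrite /d invr_gt0 mulr_gt0 // ltr_pwDl.
exists nA, (fun k => bb k), d; split => // f Hf Hd.
have Hf' := Hf; case: Hf' => Hlin Hmul Hstar _.
set v := \sum_(k < nA) f (bb k) * yb k.
apply: (inner_intertwine Hf (v := v)).
- move=> a; rewrite /v mulr_sumr mulr_suml -(casimir2 HC Hlin a).
  by apply: eq_bigr => k _; rewrite mulrA Hmul.
- have -> : v - 1 = \sum_(k < nA) (f (bb k) - bb k) * yb k.
    by rewrite -(casimir1 HC) -sumrB; apply: eq_bigr => k _; rewrite mulrBl.
  apply: (le_trans (nrm_sum _)).
  apply: (@le_trans _ _ (\sum_(k < nA) d * nrm (yb k))).
    apply: ler_sum => k _; apply: (le_trans (nrmM HC _ _)).
    by apply: ler_wpM2r; [exact: (nrm_ge0 HC) | apply: ltW].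
  rewrite -mulr_sumr -/S.
  apply: (@le_trans _ _ (d * (1 + S))); first by rewrite ler_wpM2l ?ltW //; lra.
  have S1 : 0 < 1 + S by lra.
  by rewrite /d invfM -mulrA mulVf ?mulr1 // gt_eqF.
Qed.

End Key.

End Helpers.

Unset Implicit Arguments.
Set Strict Implicit.
Set Printing Implicit Defensive.

Local Open Scope classical_set_scope.
Local Open Scope ring_scope.

Theorem proposition2p10 (R : realType) (G : topologicalType)
    (mul : G -> G -> G) (inv : G -> G) (one : G)
    (A : falgType R[i]) (star : A -> A) (nrm : A -> R)
    (alpha : G -> A -> A) :
  is_compact_group mul inv one ->
  @second_countable G ->
  is_Cstar_algebra star nrm ->
  is_continuous_action mul one star nrm alpha ->
  (forall g : G, g <> one -> ~ is_inner star (alpha g)) ->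
  finite_set [set: G].
Proof.
move=> [[[assoc one_l one_r inv_l inv_r] Hmulc Hinvc] Hhaus Hcomp] _ HC.
move=> [Haut Hone Hhom Hcont] Hout.
have [n [b [d [d0 Hkey]]]] := key_lemma HC.
have N1 : \forall g \near one, g = one.
  have : \forall g \near one, forall k, nrm (alpha g (b k) - b k) < d.
    apply: filter_forall => k; have := Hcont (b k) one d d0.
    by rewrite Hone.
  apply: filterS => g Hg; case: (pselect (g = one)) => // gn.
  by exfalso; apply: (Hout g gn); apply: Hkey (Haut g) Hg.
have Nx : forall x : G, \forall h \near x, h = x.
  move=> x.
  have Hm : (fun p : G * G => mul p.1 p.2) @ (inv x, x) --> one.
    by have := Hmulc (inv x, x); rewrite /continuous_at /= inv_l.
  have := Hm _ N1; case => -[Q1 Q2] /= [nQ1 nQ2] sub.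
  apply: filterS nQ2 => h Q2h.
  have : mul (inv x) h = one by apply: (sub (inv x, h)); split => //; apply: nbhs_singleton.
  move=> e; by rewrite -[h]one_l -(inv_r x) -assoc e one_r.
apply: contrapT => inf.
pose F := [set S : set G | finite_set (~` S)].
have FF : Filter F.
  constructor.
  - by rewrite /F /= setCT; apply: finite_set0.
  - by move=> P Q FP FQ; rewrite /F /= cofinite_setI; split.
  - by move=> P Q PQ; apply: sub_cofinite_set.
have PF : ProperFilter F.
  by constructor => //; rewrite /F /= setC0.
have FT : F setT by rewrite /F /= setCT; apply: finite_set0.
have [x [_ cx]] := Hcomp F PF FT.
have := cx (~` [set x]) [set h | h = x].
case.
- by rewrite /F /= setCK; apply: finite_set1.
- exact: Nx.
- by move=> y [yx yx']; apply: yx.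
Qed.
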